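(* The Jahangir graph $J_{2,3}$ is not greedy. Concretely, label $J_{2,3}$ as the 6-cycle $v_1v_2v_3v_4v_5v_6v_1$ together with a vertex $v_7$ adjacent to $v_1,v_3,v_5$. Then $f(J_{2,3})=8$, and for the distribution with $p(v_2)=p(v_6)=3$, $p(v_1)=p(v_7)=1$ and $p(v_3)=p(v_4)=p(v_5)=0$ (8 pebbles in total), no sequence of greedy pebbling moves with respect to the root $v_4$ places a pebble on $v_4$.
   Context: A pebbling distribution on a graph $G$ assigns a nonnegative integer number of pebbles to each vertex. A pebbling move removes two pebbles from a vertex and places one pebble on an adjacent vertex. The pebbling number $f(G)$ is the least $p$ such that, for every distribution of $p$ pebbles and every vertex $w$, some sequence of pebbling moves places a pebble on $w$. For the Jahangir graph $J_{n,m}$ ($m\ge 3$): it has $nm+1$ vertices, namely a cycle $C_{nm}$ plus one extra vertex adjacent to $m$ vertices of the cycle that are consecutively at distance $n$ from each other along the cycle. Given a root $w$, a pebbling move from $u$ to $v$ is greedy if $\mathrm{dist}(v,w)<\mathrm{dist}(u,w)$. A graph $G$ is greedy if, from every distribution of $f(G)$ pebbles and for every root $w$, one pebble can be moved to $w$ using only greedy pebbling moves. *)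

(* Defs.v *)
From mathcomp Require Import all_boot.
Set Implicit Arguments. Unset Strict Implicit. Unset Printing Implicit Defensive.

(* Graphs are simple graphs given by a symmetric irreflexive relation [e] on a
   finite vertex type [T]. *)

(** Graph distance: least k such that there is a walk of length k from u to v
    (returns #|T| if there is none; in a connected graph distances are < #|T|). *)
Fixpoint walkb (T : finType) (e : rel T) (k : nat) (u v : T) : bool :=
  match k with
  | 0 => u == v
  | k'.+1 => [exists x, e u x && walkb e k' x v]
  end.

Definition dist (T : finType) (e : rel T) (u v : T) : nat :=
  find (fun k => walkb e k u v) (iota 0 #|T|).

Definition distribution (T : finType) := {ffun T -> nat}.

Definition size_dist (T : finType) (D : distribution T) : nat := \sum_(x : T) D x.

Definition move_result (T : finType) (D : distribution T) (u v : T) : distribution T :=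
  [ffun x => D x - 2 * (x == u) + (x == v)].

Definition pstep (T : finType) (e : rel T) (ok : T -> T -> bool)
    (D D' : distribution T) : Prop :=
  exists u v, [&& e u v, ok u v & 2 <= D u] /\ D' = move_result D u v.

Inductive preach (T : finType) (e : rel T) (ok : T -> T -> bool)
    : distribution T -> distribution T -> Prop :=
  | preach_refl D : preach e ok D D
  | preach_step D D' D'' : pstep e ok D D' -> preach e ok D' D'' -> preach e ok D D''.

Definition solvable_with (T : finType) (e : rel T) (ok : T -> T -> bool)
    (D : distribution T) (w : T) : Prop :=
  exists D', preach e ok D D' /\ 0 < D' w.

Definition solvable (T : finType) (e : rel T) (D : distribution T) (w : T) : Prop :=
  solvable_with e (fun _ _ => true) D w.

Definition greedy_solvable (T : finType) (e : rel T) (D : distribution T) (w : T) : Prop :=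
  solvable_with e (fun u v => dist e v w < dist e u w) D w.

Definition all_solvable (T : finType) (e : rel T) (p : nat) : Prop :=
  forall (D : distribution T) (w : T), size_dist D = p -> solvable e D w.

Definition pebbling_number (T : finType) (e : rel T) (p : nat) : Prop :=
  all_solvable e p /\ forall q, all_solvable e q -> p <= q.

Definition greedy (T : finType) (e : rel T) : Prop :=
  forall p, pebbling_number e p ->
  forall (D : distribution T) (w : T), size_dist D = p -> greedy_solvable e D w.

(** Jahangir graph J_{n,m} on vertices 0..nm : cycle 0,1,...,nm-1 and the extra
    vertex nm adjacent to the cycle vertices divisible by n (0, n, 2n, ...). *)
Definition jahangir (n m : nat) : rel 'I_(n * m).+1 :=
  fun x y =>
    let N := n * m in
    [|| [&& (x : nat) < N, (y : nat) < N &
           ((y : nat) == x.+1 %% N) || ((x : nat) == y.+1 %% N)],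
        [&& (x : nat) == N, (y : nat) < N & n %| y]
      | [&& (y : nat) == N, (x : nat) < N & n %| x]].
Arguments jahangir : clear implicits.

(* Main.v *)
Require Import Defs.
From mathcomp Require Import all_boot.
From mathcomp Require Import zify.
Set Implicit Arguments. Unset Strict Implicit. Unset Printing Implicit Defensive.

Section Solver.
Variables (T : finType) (e : rel T) (ok : T -> T -> bool).
Hypothesis eirr : forall u v, e u v -> u != v.

Fixpoint solvb (n : nat) (D : distribution T) (w : T) : bool :=
  (0 < D w) ||
  match n with
  | 0 => false
  | n'.+1 => [exists u, [exists v, [&& e u v, ok u v, 2 <= D u &
                solvb n' (move_result D u v) w]]]
  end.

Lemma solvb_sound n D w : solvb n D w -> solvable_with e ok D w.
Proof.
elim: n D => [|n IH] D /=.
  by rewrite orbF => H; exists D; split => //; constructor.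
case/orP => [H|]; first by exists D; split => //; constructor.
case/existsP => u /existsP [v] /and4P [euv okuv Du /IH [D' [HR HD']]].
exists D'; split => //; apply: preach_step HR.
by exists u, v; rewrite euv okuv Du.
Qed.

Lemma solvb_mono n m D w : n <= m -> solvb n D w -> solvb m D w.
Proof.
elim: n m D => [|n IH] [|m] D //= Hnm.
  by rewrite orbF => ->.
case/orP => [->//|/existsP [u /existsP [v /and4P [a b c d]]]].
apply/orP; right; apply/existsP; exists u; apply/existsP; exists v.
by rewrite a b c (IH m).
Qed.

Lemma size_move (D : distribution T) u v : 2 <= D u -> u != v ->
  size_dist (move_result D u v) < size_dist D.
Proof.
move=> Hu Huv; rewrite /size_dist.
rewrite (bigD1 u) //= (bigD1 u (P := predT)) //= (bigD1 v) /=; last by rewrite eq_sym.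
rewrite (bigD1 v (P := fun x => x != u)) /=; last by rewrite eq_sym.
rewrite !ffunE eqxx (negbTE Huv) eq_sym (negbTE Huv) eqxx /=.
rewrite (eq_bigr (fun x => D x)); last first.
  move=> x /andP [Hxv Hxu]; rewrite ffunE /=; rewrite (negbTE Hxv) (negbTE Hxu); lia.
move: (\sum_(i | _) _) => S; rewrite muln1 muln0 subn0 addn0; move: (D u) (D v) Hu => a b; lia.
Qed.

Lemma solvb_complete D D' w : preach e ok D D' -> 0 < D' w ->
  solvb (size_dist D) D w.
Proof.
elim=> [D0 H|D0 D1 D2 [u [v [/and3P [euv okuv Du] ->]]] _ IH H].
  by case: (size_dist D0) => /= [|n]; rewrite H.
have Hs := size_move Du (eirr euv).
move: Hs (IH H); case: (size_dist D0) => // k Hk Hsol.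
apply/orP; right; apply/existsP; exists u; apply/existsP; exists v.
by rewrite euv okuv Du; exact: (@solvb_mono _ k _ _ Hk Hsol).
Qed.

Lemma solvbP D w : solvable_with e ok D w <-> solvb (size_dist D) D w.
Proof.
split; last exact: solvb_sound.
by case=> D' [H1 H2]; exact: solvb_complete H1 H2.
Qed.
End Solver.

Fixpoint comps (k n : nat) : seq (seq nat) :=
  match k with
  | 0 => if n is 0 then [:: [::]] else [::]
  | k'.+1 => flatten [seq [seq i :: l | l <- comps k' (n - i)] | i <- iota 0 n.+1]
  end.

Lemma comps_S k n : comps k.+1 n =
  flatten [seq [seq i :: l | l <- comps k (n - i)] | i <- iota 0 n.+1].
Proof. by []. Qed.

Lemma comps_mem (l : seq nat) : l \in comps (size l) (sumn l).
Proof.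
elim: l => [|a l IH]; first by [].
change (a :: l \in comps (size l).+1 (a + sumn l)); rewrite comps_S.
apply/flattenP; exists [seq a :: l0 | l0 <- comps (size l) (a + sumn l - a)].
  apply/mapP; exists a => //; rewrite mem_iota; lia.
by rewrite addKn mem_map ?IH //; move=> x y [].
Qed.

Definition JG := jahangir 2 3.
Definition V := 'I_(2 * 3).+1.

Lemma JG_irr (u v : V) : JG u v -> u != v.
Proof.
apply: contraTN => /eqP ->; rewrite /JG /jahangir.
case: v => [[|[|[|[|[|[|[|k]]]]]]] Hk] //.
Qed.

Definition je (x y : nat) : bool :=
  [|| [&& x < 6, y < 6 & (y == x.+1 %% 6) || (x == y.+1 %% 6)],
      [&& x == 6, y < 6 & 2 %| y]
    | [&& y == 6, x < 6 & 2 %| x]].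

Lemma JGE (u v : V) : JG u v = je u v.
Proof. by []. Qed.

Definition mv (l : seq nat) (u v : nat) : seq nat :=
  [seq nth 0 l i - 2 * (i == u) + (i == v) | i <- iota 0 7].

Fixpoint solvl (ok : nat -> nat -> bool) (n : nat) (l : seq nat) (w : nat) : bool :=
  (0 < nth 0 l w) ||
  match n with
  | 0 => false
  | n'.+1 => has (fun u => has (fun v => [&& je u v, ok u v, 2 <= nth 0 l u &
                solvl ok n' (mv l u v) w]) (iota 0 7)) (iota 0 7)
  end.

Fixpoint walkl (k : nat) (u v : nat) : bool :=
  match k with
  | 0 => u == v
  | k'.+1 => has (fun x => je u x && walkl k' x v) (iota 0 7)
  end.

Definition distl (u v : nat) : nat := find (fun k => walkl k u v) (iota 0 7).

Definition lD (D : distribution V) : seq nat := [seq D (inord i) | i <- iota 0 7].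

Lemma ex_iota (P : nat -> bool) : [exists u : V, P (val u)] = has P (iota 0 7).
Proof.
apply/existsP/hasP => [[u Hu]|[x Hx Px]].
  by exists (val u) => //; rewrite mem_iota /= ltn_ord.
have Hx7 : x < 7 by move: Hx; rewrite mem_iota.
by exists (inord x : V); rewrite (_ : val (inord x : V) = x) //; exact: inordK.
Qed.

Lemma walkE k (u v : V) : walkb JG k u v = walkl k u v.
Proof.
elim: k u => [|k IH] u; first by [].
change ([exists x, JG u x && walkb JG k x v] = has (fun x => je u x && walkl k x v) (iota 0 7)).
rewrite -ex_iota; apply: eq_existsb => x.
have Hx : (inord (val x) : V) = x by rewrite inord_val.
by rewrite IH JGE.
Qed.

Lemma distE (u v : V) : dist JG u v = distl u v.
Proof.
rewrite /dist card_ord /distl; apply: eq_find => k; exact: walkE.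
Qed.

Lemma nth_lD D i : i < 7 -> nth 0 (lD D) i = D (inord i).
Proof. by move=> Hi; rewrite (nth_map 0) ?size_iota // nth_iota. Qed.

Lemma lD_move D (u v : V) : lD (move_result D u v) = mv (lD D) u v.
Proof.
apply/eq_in_map => i; rewrite mem_iota /= => Hi.
rewrite ffunE nth_lD //.
by rewrite -!val_eqE /= !inordK.
Qed.

Lemma size_lD D : size_dist D = sumn (lD D).
Proof.
rewrite /size_dist sumnE big_map -[iota 0 7]/(index_iota 0 7) big_mkord.
apply: eq_bigr => i _; by rewrite inord_val.
Qed.

Lemma lD_nth l : size l = 7 -> lD [ffun i : V => nth 0 l i] = l.
Proof.
move=> Hl; rewrite -{2}(mkseq_nth 0 l) Hl /mkseq.
apply/eq_in_map => i; rewrite mem_iota /= => Hi.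
by rewrite ffunE inordK.
Qed.

Lemma solv_corr ok (okl : nat -> nat -> bool) (Hok : forall u v : V, ok u v = okl u v) n D (w : V) :
  solvb JG ok n D w = solvl okl n (lD D) w.
Proof.
have Hw : nth 0 (lD D) w = D w by rewrite nth_lD ?ltn_ord // inord_val.
elim: n D Hw => [|n IH] D Hw; first by rewrite /= Hw.
change ((0 < D w) || [exists u, [exists v, [&& JG u v, ok u v, 2 <= D u &
   solvb JG ok n (move_result D u v) w]]] =
  (0 < nth 0 (lD D) w) || has (fun u => has (fun v => [&& je u v, okl u v, 2 <= nth 0 (lD D) u &
                solvl okl n (mv (lD D) u v) w]) (iota 0 7)) (iota 0 7)).
rewrite Hw; congr orb; rewrite -ex_iota; apply: eq_existsb => u.
rewrite -ex_iota; apply: eq_existsb => v.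
rewrite JGE Hok nth_lD ?ltn_ord // inord_val IH ?lD_move //.
by rewrite -lD_move nth_lD ?ltn_ord // inord_val.
Qed.

Definition ttn := fun _ _ : nat => true.

(* BFS (complete, used for negative results) *)
Definition succs (ok : nat -> nat -> bool) (l : seq nat) : seq (seq nat) :=
  [seq mv l p.1 p.2 | p <- [seq p <- [seq (x, y) | x <- iota 0 7, y <- iota 0 7] |
     [&& je p.1 p.2, ok p.1 p.2 & 2 <= nth 0 l p.1]]].

Fixpoint bfs ok n (S : seq (seq nat)) w : bool :=
  has (fun l => 0 < nth 0 l w) S ||
  match n with 0 => false | n'.+1 => bfs ok n' (undup (flatten (map (succs ok) S))) w end.

Lemma has_succs ok l (P : pred (seq nat)) :
  has P (succs ok l) = has (fun u => has (fun v => [&& je u v, ok u v, 2 <= nth 0 l u &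
                P (mv l u v)]) (iota 0 7)) (iota 0 7).
Proof.
apply/hasP/hasP.
  case=> l' /mapP [[x y]]; rewrite mem_filter => /andP [/and3P [H1 H2 H3]].
  case/allpairsP => [[x' y'] [Hx Hy [Ex Ey]]] El HP.
  rewrite {}El {}Ex {}Ey in H1 H2 H3 HP Hx Hy *.
  exists x' => //; apply/hasP; exists y' => //.
  by rewrite H1 H2 H3.
case=> u Hu /hasP [v Hv /and4P [H1 H2 H3 H4]].
exists (mv l u v) => //; apply/mapP; exists (u, v) => //.
rewrite mem_filter; apply/andP; split; first by rewrite /= H1 H2 H3.
apply/allpairsP; by exists (u, v).
Qed.

Lemma has_flatten' (T : Type) (p : pred T) (ss : seq (seq T)) :
  has p (flatten ss) = has (has p) ss.
Proof. by elim: ss => [|s ss IH] //=; rewrite has_cat IH. Qed.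

Lemma bfs_solvl ok n S w : bfs ok n S w = has (fun l => solvl ok n l w) S.
Proof.
elim: n S => [|n IH] S.
  by rewrite /= orbF; apply: eq_has => l; rewrite orbF.
change (has (fun l => 0 < nth 0 l w) S ||
   bfs ok n (undup (flatten (map (succs ok) S))) w =
   has (fun l => (0 < nth 0 l w) || has (fun u => has (fun v => [&& je u v, ok u v, 2 <= nth 0 l u &
                solvl ok n (mv l u v) w]) (iota 0 7)) (iota 0 7)) S).
rewrite IH has_undup has_flatten' has_map -has_predU; apply: eq_has => l /=.
by rewrite has_succs.
Qed.

Lemma solv_bfs ok (okl : nat -> nat -> bool) (Hok : forall u v : V, ok u v = okl u v) D (w : V) :
  solvable_with JG ok D w -> bfs okl (size_dist D) [:: lD D] w.
Proof.
move/(solvbP _ JG_irr); rewrite (solv_corr Hok) bfs_solvl /=.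
by rewrite orbF.
Qed.

(* DFS (sound, used for positive results) *)
Definition edges := [:: (0,1); (0,5); (0,6); (1,0); (1,2); (2,1); (2,3); (2,6);
  (3,2); (3,4); (4,3); (4,5); (4,6); (5,0); (5,4); (6,0); (6,2); (6,4)].

Fixpoint hasl (T : Type) (p : T -> bool) (s : seq T) : bool :=
  match s with [::] => false | x :: s' => if p x then true else hasl p s' end.

Lemma haslE (T : Type) (p : T -> bool) s : hasl p s = has p s.
Proof. by elim: s => //= x s ->. Qed.

Fixpoint dfs (ok : nat -> nat -> bool) (n : nat) (l : seq nat) (w : nat) : bool :=
  if 0 < nth 0 l w then true else match n with 0 => false | n'.+1 =>
   hasl (fun p => if ok p.1 p.2 then if 2 <= nth 0 l p.1 then dfs ok n' (mv l p.1 p.2) w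
      else false else false) edges end.

Lemma dfs0 ok l w : dfs ok 0 l w = (0 < nth 0 l w).
Proof. by rewrite /dfs; case: (0 < _). Qed.

Lemma dfsS ok n l w : dfs ok n.+1 l w = (0 < nth 0 l w) ||
  has (fun p => [&& ok p.1 p.2, 2 <= nth 0 l p.1 & dfs ok n (mv l p.1 p.2) w]) edges.
Proof. by rewrite -haslE. Qed.

Lemma edges_ok : all (fun p => [&& je p.1 p.2, p.1 < 7 & p.2 < 7]) edges.
Proof. by vm_compute. Qed.

Lemma dfs_sound ok n D (w : V) : dfs ok n (lD D) w -> solvable JG D w.
Proof.
elim: n D => [|n IH] D.
  rewrite dfs0 nth_lD ?ltn_ord // inord_val => H.
  by exists D; split => //; constructor.
rewrite dfsS; case/orP.
  rewrite nth_lD ?ltn_ord // inord_val => H.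
  by exists D; split => //; constructor.
case/hasP => [[x y] Hp /and3P [_ H2 H3]].
move/allP: edges_ok => /(_ _ Hp) /and3P [Hje Hx Hy].
pose u : V := inord x; pose v : V := inord y.
have Hu : val u = x := inordK Hx.
have Hv : val v = y := inordK Hy.
have := IH (move_result D u v); rewrite lD_move Hu Hv => /(_ H3) [D' [HR HD']].
exists D'; split => //; apply: preach_step HR.
exists u, v; split => //.
rewrite JGE Hu Hv Hje /=.
by move: H2; rewrite nth_lD //.
Qed.

Definition dtab := [:: [:: 0; 1; 2; 3; 2; 1; 1]; [:: 1; 0; 1; 2; 3; 2; 2];
  [:: 2; 1; 0; 1; 2; 3; 1]; [:: 3; 2; 1; 0; 1; 2; 2]; [:: 2; 3; 2; 1; 0; 1; 1];
  [:: 1; 2; 3; 2; 1; 0; 2]; [:: 1; 2; 1; 2; 1; 2; 0]].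

Definition okh (w a b : nat) := nth 0 (nth [::] dtab b) w < nth 0 (nth [::] dtab a) w.

Lemma chk8 : all (fun l => all (fun w => dfs (okh w) 8 l w || dfs ttn 8 l w) (iota 0 7))
  (comps 7 8).
Proof. by vm_compute. Qed.

Lemma all8 : all_solvable JG 8.
Proof.
move=> D w HD.
have Hl : size (lD D) = 7 by rewrite size_map size_iota.
have Hs : sumn (lD D) = 8 by rewrite -size_lD.
have := comps_mem (lD D); rewrite Hl Hs => Hm.
move/allP: chk8 => /(_ _ Hm) /allP /(_ (val w)); rewrite mem_iota ltn_ord.
by move=> /(_ isT) /orP [] /dfs_sound.
Qed.

Definition lq (q : nat) := [:: 0; 0; 0; 0; 0; q; 0].

Lemma chklow : all (fun q => ~~ bfs ttn q [:: lq q] 2) (iota 0 8).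
Proof. by vm_compute. Qed.

Lemma low q : all_solvable JG q -> 8 <= q.
Proof.
move=> H; rewrite leqNgt; apply/negP => Hq.
pose D := [ffun i : V => nth 0 (lq q) i].
have HlD : lD D = lq q by rewrite lD_nth.
have Hs : size_dist D = q by rewrite size_lD HlD /= !add0n addn0.
have := H D (inord 2) Hs; move/(solv_bfs (okl := ttn)) => /(_ (fun _ _ => erefl)).
rewrite HlD Hs inordK //.
by move/allP: chklow => /(_ q); rewrite mem_iota /= Hq => /(_ isT) /negP.
Qed.

Definition okg (x y : nat) := distl y 3 < distl x 3.
Definition lg := [:: 1; 3; 0; 0; 0; 3; 1].

Lemma chkgreedy : ~~ bfs okg 8 [:: lg] 3.
Proof. by vm_compute. Qed.

Theorem theorem2p3 :
  let G := jahangir 2 3 in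
  let v := fun k : nat => (inord k.-1 : 'I_(2 * 3).+1) in
  let D0 := [ffun x : 'I_(2 * 3).+1 => nth 0 [:: 1; 3; 0; 0; 0; 3; 1] x] in
  [/\ pebbling_number G 8,
      size_dist D0 = 8,
      ~ greedy_solvable G D0 (v 4)
    & ~ greedy G].
Proof.
move=> G v D1.
have P8 : pebbling_number G 8 by split; [exact: all8 | exact: low].
have HlD : lD D1 = lg by rewrite /D1 lD_nth.
have S8 : size_dist D1 = 8 by rewrite size_lD HlD.
have NG : ~ greedy_solvable G D1 (v 4).
  move/(solv_bfs (okl := okg)).
  have Hv : val (v 4) = 3 by rewrite /v /= inordK.
  rewrite HlD S8 Hv.
    by move=> H; apply/negP: chkgreedy; apply: H => x y; rewrite /okg !distE Hv.
split => // Hg; apply: NG; exact: Hg _ P8 _ _ S8.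
Qed.
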